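(* Let $f$ be a spherically symmetric solution of (RVM) (equivalently of the reduced system below) with total mass $M$, and let $m(t,r)$ be the enclosed mass, so that $0 \leq m(t,r) \leq M$. Let $r, \ell > 0$ and $w < 0$ be given, let $(\mathcal{R}(t), \mathcal{W}(t), \mathcal{L}(t))$ solve $$\dot{\mathcal{R}} = \frac{\mathcal{W}}{\sqrt{1+\mathcal{W}^2 + \mathcal{L}\mathcal{R}^{-2}}},\quad \dot{\mathcal{W}} = \frac{\mathcal{L}}{\mathcal{R}^3\sqrt{1+\mathcal{W}^2+\mathcal{L}\mathcal{R}^{-2}}} + \frac{m(t,\mathcal{R})}{\mathcal{R}^2},\quad \dot{\mathcal{L}} = 0$$ for all $t \geq 0$ with $\mathcal{R}(0)=r$, $\mathcal{W}(0)=w$, $\mathcal{L}(0)=\ell$ (so $\mathcal{L}(t) = \ell$), and define $$D = \ell + M r \sqrt{1 + w^2 + \ell r^{-2}}.$$ Then: 1. There exists a unique $T_0 > 0$ such that $\mathcal{W}(t) < 0$ for $t \in [0,T_0)$, $\mathcal{W}(T_0) = 0$, and $\mathcal{W}(t) > 0$ for $t \in (T_0,\infty)$. 2. $T_0$ satisfies $$r\left(1 - \sqrt{\frac{D}{r^2w^2 + D}}\right) \leq T_0 \leq \frac{-w r^3\sqrt{1+w^2+\ell r^{-2}}}{\ell}.$$ 3. With $\mathcal{R}_- = r\sqrt{\frac{\ell}{r^2w^2+\ell}}$ and $\mathcal{R}_+ = r\sqrt{\frac{D}{r^2w^2+D}}$, we have $\mathcal{R}_- \leq \mathcal{R}(T_0)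 \leq \mathcal{R}_+$. 4. For all $t \in [0,T_0]$, $\mathcal{W}(t)^2 + \ell\mathcal{R}(t)^{-2} \leq w^2 + \ell r^{-2}$. 5. For all $t \in [0,T_0]$, $$\mathcal{R}(t)^2 \leq \left(r - \frac{|w|}{\sqrt{1+w^2+\ell r^{-2}}}\,t\right)^2 + \frac{D}{r^2(1+w^2+\ell r^{-2})}\,t^2.$$
   Context: The relativistic Vlasov–Maxwell system (RVM) is $\partial_t f + \hat p\cdot\nabla_x f + (E+\hat p\wedge B)\cdot\nabla_p f = 0$, $\partial_t E = \nabla\wedge B - 4\pi j$, $\nabla\cdot E = 4\pi\rho$, $\partial_t B = -\nabla\wedge E$, $\nabla\cdot B = 0$, with $\hat p = p/\sqrt{1+|p|^2}$, $\rho = \int f\,dp$, $j = \int \hat p f\,dp$, and $f \ge 0$. For spherically symmetric solutions (invariant under simultaneous rotation of $x$ and $p$), use the variables $r = |x|$, $w = x\cdot p / r$ (radial momentum), $\ell = |x\times p|^2$ (squared angular momentum), writing $f = f(t,r,w,\ell)$. Then $B = 0$, $\rho(t,r) = \frac{\pi}{r^2}\int_0^\infty\int_{-\infty}^\infty f(t,r,w,\ell)\,dw\,d\ell$, the enclosed mass is $m(t,r) = 4\pi\int_0^r s^2\rho(t,s)\,ds$, $E(t,x) = \frac{m(t,r)}{r^2}\frac{x}{r}$, and $f$ satisfies $$\partial_t f + \frac{w}{\sqrt{1+w^2+\ell r^{-2}}}\partial_r f + \left(\frac{\ell}{r^3\sqrt{1+w^2+\ell r^{-2}}} + \frac{m(t,r)}{r^2}\right)\partial_w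 f = 0.$$ The total mass is $M = \iint_{\mathbb{R}^6} f(0,x,p)\,dp\,dx$, which is conserved, and $0 \le m(t,r) \le M$. *)

(* Defs.v *)
From Stdlib Require Import Reals.
From Coquelicot Require Import Coquelicot.
Open Scope R_scope.

Definition gam (Rv Wv L : R) : R := sqrt (1 + Wv ^ 2 + L / Rv ^ 2).

(* (Rf, Wf) is a solution on [0, oo) of the characteristic system with
   constant angular momentum L(t) = l, initial data (r, w), and field m:
     R' = W / gam,   W' = l / (R^3 gam) + m(t,R)/R^2.
   Derivatives are two-sided for t > 0; at t = 0 we only require right
   continuity and the initial values (the solution lives on [0, oo)). *)
Definition char_solution (m : R -> R -> R) (r w l : R) (Rf Wf : R -> R) : Prop :=
  Rf 0 = r /\ Wf 0 = w /\
  (forall t, 0 <= t -> 0 < Rf t) /\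
  filterlim Rf (at_right 0) (locally (Rf 0)) /\
  filterlim Wf (at_right 0) (locally (Wf 0)) /\
  (forall t, 0 < t -> is_derive Rf t (Wf t / gam (Rf t) (Wf t) l)) /\
  (forall t, 0 < t ->
     is_derive Wf t (l / (Rf t ^ 3 * gam (Rf t) (Wf t) l) + m t (Rf t) / Rf t ^ 2)).

Definition sign_change_time (Wf : R -> R) (T0 : R) : Prop :=
  0 < T0 /\
  (forall t, 0 <= t < T0 -> Wf t < 0) /\
  Wf T0 = 0 /\
  (forall t, T0 < t -> 0 < Wf t).

(* Main.v *)
Require Import Defs.
From Stdlib Require Import Reals Lra Psatz.
From Coquelicot Require Import Coquelicot.
Open Scope R_scope.

Definition rc (f : R -> R) (a : R) := filterlim f (at_right 0) (locally a).

Lemma ballR (x e y : R) : ball x e y <-> Rabs (y - x) < e.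
Proof. unfold ball; simpl; unfold AbsRing_ball, abs, minus, plus, opp; simpl. tauto. Qed.

Lemma rc_extract f a (e : R) : rc f a -> 0 < e ->
  exists d, 0 < d /\ forall y, 0 < y < d -> Rabs (f y - a) < e.
Proof.
  intros H He. destruct (proj1 (filterlim_locally f a) H (mkposreal e He)) as [d Hd].
  exists d; split; [apply cond_pos|]. intros y [Hy1 Hy2].
  apply ballR. apply Hd; auto. apply ballR. rewrite Rminus_0_r, Rabs_right; lra.
Qed.

Lemma rc_plus f g a b : rc f a -> rc g b -> rc (fun x => f x + g x) (a + b).
Proof. intros Hf Hg. unfold rc. eapply filterlim_comp_2; eauto. apply (@filterlim_plus R_AbsRing R_NormedModule). Qed.

Lemma rc_mult f g a b : rc f a -> rc g b -> rc (fun x => f x * g x) (a * b).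
Proof. intros Hf Hg. unfold rc. eapply filterlim_comp_2; eauto. apply (@filterlim_mult R_AbsRing). Qed.

Lemma rc_comp f h a : rc f a -> continuous h a -> rc (fun x => h (f x)) (h a).
Proof. intros Hf Hh. unfold rc. eapply filterlim_comp; eauto. Qed.

Lemma rc_const c : rc (fun _ => c) c.
Proof. apply filterlim_const. Qed.

Lemma rc_id : rc (fun x => x) 0.
Proof. intros P [eps HP]. exists eps. intros y Hy _. apply HP, Hy. Qed.

Lemma drv_eq (f : R -> R) (x a b : R) : is_derive f x a -> a = b -> is_derive f x b.
Proof. intros H ->; exact H. Qed.
Lemma drv_comp (h : R -> R) (dh : R) (g : R -> R) (dg x : R) : is_derive h (g x) dh -> is_derive g x dg -> is_derive (fun y => h (g y)) x (dg * dh).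
Proof. intros H1 H2. exact (is_derive_comp h g x dh dg H1 H2). Qed.
Lemma drv_plus (f g : R -> R) (df dg x : R) : is_derive f x df -> is_derive g x dg -> is_derive (fun y => f y + g y) x (df + dg).
Proof. intros H1 H2. exact (is_derive_plus f g x df dg H1 H2). Qed.

Lemma mvt_le (g dg : R -> R) (a b : R) : a < b -> (forall x, a <= x <= b -> is_derive g x (dg x)) ->
  (forall x, a <= x <= b -> 0 <= dg x) -> g a <= g b.
Proof.
  intros Hab Hd Hp. destruct (MVT_gen g a b dg) as [c [Hc Heq]].
  - rewrite Rmin_left, Rmax_right by lra. intros; apply Hd; lra.
  - rewrite Rmin_left, Rmax_right by lra. intros x Hx. apply continuity_pt_filterlim.
    apply (@ex_derive_continuous R_AbsRing R_NormedModule). eexists. apply Hd; lra.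
  - rewrite Rmin_left, Rmax_right in Hc by lra. specialize (Hp c Hc). nra.
Qed.

Lemma mvt_lt (g dg : R -> R) (a b : R) : a < b -> (forall x, a <= x <= b -> is_derive g x (dg x)) ->
  (forall x, a <= x <= b -> 0 < dg x) -> g a < g b.
Proof.
  intros Hab Hd Hp. destruct (MVT_gen g a b dg) as [c [Hc Heq]].
  - rewrite Rmin_left, Rmax_right by lra. intros; apply Hd; lra.
  - rewrite Rmin_left, Rmax_right by lra. intros x Hx. apply continuity_pt_filterlim.
    apply (@ex_derive_continuous R_AbsRing R_NormedModule). eexists. apply Hd; lra.
  - rewrite Rmin_left, Rmax_right in Hc by lra. specialize (Hp c Hc). nra.
Qed.

Lemma mono0 (g dg : R -> R) (t : R) : 0 < t -> (forall x, 0 < x <= t -> is_derive g x (dg x)) ->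
  (forall x, 0 < x <= t -> 0 <= dg x) -> rc g (g 0) -> g 0 <= g t.
Proof.
  intros Ht Hd Hp Hc. destruct (Rle_lt_dec (g 0) (g t)) as [|Hlt]; auto.
  destruct (rc_extract g (g 0) (g 0 - g t) Hc) as [d [Hd0 Hdd]]; [lra|].
  set (y := Rmin (d/2) t).
  assert (Hy : 0 < y <= t). { unfold y. split. apply Rmin_glb_lt; lra. apply Rmin_r. }
  assert (Hyd : y < d). { unfold y. eapply Rle_lt_trans. apply Rmin_l. lra. }
  assert (Hgy : g y <= g t).
  { destruct (Req_dec y t) as [->|Hne]; [lra|].
    apply (mvt_le g dg); [lra| |]; intros; [apply Hd|apply Hp]; lra. }
  specialize (Hdd y (conj (proj1 Hy) Hyd)). apply Rabs_def2 in Hdd. lra.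
Qed.

Lemma monoI (g dg : R -> R) a b : 0 <= a <= b -> (forall x, 0 < x <= b -> is_derive g x (dg x)) ->
  (forall x, 0 < x <= b -> 0 <= dg x) -> rc g (g 0) -> g a <= g b.
Proof.
  intros Hab Hd Hp Hc. destruct (Req_dec a b) as [->|Hne]; [lra|].
  destruct (Req_dec a 0) as [->|Ha0].
  - apply (mono0 g dg); auto; lra.
  - apply (mvt_le g dg); [lra| |]; intros; [apply Hd|apply Hp]; lra.
Qed.

Lemma drv_id x : is_derive (fun y : R => y) x 1.
Proof. exact (@is_derive_id R_AbsRing x). Qed.
Lemma drv_scal (f : R -> R) k df x : is_derive f x df -> is_derive (fun y => k * f y) x (k * df).
Proof. apply is_derive_scal. Qed.
Lemma drv_sq (f : R -> R) df x : is_derive f x df -> is_derive (fun y => f y ^ 2) x (2 * f x * df).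
Proof. intro H. eapply drv_eq. apply (is_derive_pow f 2 x df H). simpl. ring. Qed.

Lemma cont_R (h : R -> R) a dh : is_derive h a dh -> continuous h a.
Proof. intro H. apply (@ex_derive_continuous R_AbsRing R_NormedModule). eexists; exact H. Qed.

Lemma gam_facts Rv Wv l : 0 < Rv -> 0 <= l ->
  1 <= gam Rv Wv l /\ gam Rv Wv l ^ 2 = 1 + Wv ^ 2 + l / Rv ^ 2 /\ Rabs Wv < gam Rv Wv l.
Proof.
  intros HR Hl. unfold gam.
  assert (H0 : 0 <= l / Rv ^ 2) by (apply Rdiv_le_0_compat; [lra| apply pow2_gt_0; lra]).
  assert (H1 : 0 <= Wv ^ 2) by apply pow2_ge_0.
  split; [|split].
  - apply Rle_trans with (sqrt 1); [rewrite sqrt_1; lra| apply sqrt_le_1_alt; lra].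
  - apply pow2_sqrt. lra.
  - rewrite <- sqrt_Rsqr_abs. unfold Rsqr. apply sqrt_lt_1_alt. split; nra.
Qed.

Lemma div_anti l a b : 0 <= l -> 0 < a <= b -> l / b <= l / a.
Proof. intros. unfold Rdiv. apply Rmult_le_compat_l; [lra|]. apply Rinv_le_contravar; lra. Qed.

Lemma drv_inv_sq (c y : R) : y <> 0 -> is_derive (fun z => c / z ^ 2) y (-2 * c / y ^ 3).
Proof. intro Hy. auto_derive. auto. field. auto. Qed.

Lemma drv_sqrtq (K D y : R) : 0 < K * y ^ 2 - D ->
  is_derive (fun z => sqrt (K * z ^ 2 - D)) y (K * y / sqrt (K * y ^ 2 - D)).
Proof. intro Hy. auto_derive; replace (K * (y * (y * 1)) + - D) with (K * y ^ 2 - D) by ring; auto.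
  assert (0 < sqrt (K * y ^ 2 - D)) by (apply sqrt_lt_R0; auto). field. lra. Qed.

Lemma cont_sq a : continuous (fun y : R => y ^ 2) a.
Proof. apply (cont_R _ a (2 * a)). auto_derive. auto. ring. Qed.

Lemma cont_inv_sq c a : a <> 0 -> continuous (fun y : R => c / y ^ 2) a.
Proof. intro. apply (cont_R _ a _ (drv_inv_sq c a H)). Qed.

Lemma cont_sqrtq K D a : 0 < K * a ^ 2 - D -> continuous (fun z => sqrt (K * z ^ 2 - D)) a.
Proof. intro. apply (cont_R _ a _ (drv_sqrtq K D a H)). Qed.

Lemma sqrt_bound_le x r A B : 0 < x -> 0 < r -> 0 < A -> 0 <= B -> x ^ 2 * A <= r ^ 2 * B -> x <= r * sqrt (B / A).
Proof.
  intros. rewrite <- (sqrt_pow2 r) by lra. rewrite <- sqrt_mult_alt by (apply pow2_ge_0).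
  rewrite <- (sqrt_pow2 x) by lra. apply sqrt_le_1_alt.
  apply (Rmult_le_reg_r A); auto. replace (r ^ 2 * (B / A) * A) with (r ^ 2 * B) by (field; lra). lra.
Qed.

Lemma sqrt_bound_ge x r A B : 0 < x -> 0 < r -> 0 < A -> 0 <= B -> r ^ 2 * B <= x ^ 2 * A -> r * sqrt (B / A) <= x.
Proof.
  intros. rewrite <- (sqrt_pow2 r) by lra. rewrite <- sqrt_mult_alt by (apply pow2_ge_0).
  rewrite <- (sqrt_pow2 x) by lra. apply sqrt_le_1_alt.
  apply (Rmult_le_reg_r A); auto. replace (r ^ 2 * (B / A) * A) with (r ^ 2 * B) by (field; lra). lra.
Qed.


Theorem lemma1 (M : R) (m : R -> R -> R) (r w l : R) (Rf Wf : R -> R) :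
  (forall t s, 0 <= t -> 0 < s -> 0 <= m t s <= M) ->
  0 < r -> 0 < l -> w < 0 ->
  char_solution m r w l Rf Wf ->
  let g0 := sqrt (1 + w ^ 2 + l / r ^ 2) in
  let D := l + M * r * g0 in
  exists T0,
    sign_change_time Wf T0 /\
    (forall T1, sign_change_time Wf T1 -> T1 = T0) /\
    (r * (1 - sqrt (D / (r ^ 2 * w ^ 2 + D))) <= T0 /\
     T0 <= - w * r ^ 3 * g0 / l) /\
    (r * sqrt (l / (r ^ 2 * w ^ 2 + l)) <= Rf T0 /\
     Rf T0 <= r * sqrt (D / (r ^ 2 * w ^ 2 + D))) /\
    (forall t, 0 <= t <= T0 -> Wf t ^ 2 + l / Rf t ^ 2 <= w ^ 2 + l / r ^ 2) /\
    (forall t, 0 <= t <= T0 ->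
       Rf t ^ 2 <= (r - Rabs w / g0 * t) ^ 2 + D / (r ^ 2 * (1 + w ^ 2 + l / r ^ 2)) * t ^ 2).
Proof.
  intros Hm Hr Hl Hw [HR0 [HW0 [HRpos [HRc [HWc [HdR HdW]]]]]] g0 D.
  assert (HM : 0 <= M) by (destruct (Hm 0 r); lra).
  set (E := w ^ 2 + l / r ^ 2).
  assert (HE : 0 < E) by (unfold E; assert (0 < l / r^2) by (apply Rdiv_lt_0_compat; [lra|apply pow2_gt_0; lra]); nra).
  assert (Hg0 : g0 = gam r w l) by reflexivity.
  destruct (gam_facts r w l Hr ltac:(lra)) as [Hg01 [Hg02 Hg03]]. rewrite <- Hg0 in Hg01, Hg02, Hg03.
  assert (HD : 0 < D) by (unfold D; assert (0 <= M * r * g0) by (apply Rmult_le_pos; [apply Rmult_le_pos|]; lra); lra).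
  pose (G := fun x => gam (Rf x) (Wf x) l).
  assert (HG : forall x, 0 <= x -> 1 <= G x /\ G x ^ 2 = 1 + Wf x ^ 2 + l / Rf x ^ 2 /\ Rabs (Wf x) < G x).
  { intros x Hx. apply gam_facts; [apply HRpos; auto|lra]. }
  pose (dW := fun x => l / (Rf x ^ 3 * G x) + m x (Rf x) / Rf x ^ 2).
  assert (HdWpos : forall x, 0 < x -> 0 < dW x).
  { intros x Hx. unfold dW. destruct (HG x ltac:(lra)) as [H1 _]. pose proof (HRpos x ltac:(lra)).
    destruct (Hm x (Rf x) ltac:(lra) ltac:(auto)).
    assert (0 < l / (Rf x ^ 3 * G x)) by (apply Rdiv_lt_0_compat; [lra| apply Rmult_lt_0_compat; [apply pow_lt|]; lra]).
    assert (0 <= m x (Rf x) / Rf x ^ 2) by (apply Rdiv_le_0_compat; [lra| apply pow2_gt_0; lra]). lra. }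
  assert (Wstrict : forall a b, 0 <= a < b -> Wf a < Wf b).
  { intros a b Hab.
    assert (Hmid : Wf a <= Wf ((a + b) / 2)).
    { apply (monoI Wf dW); [lra| | |exact HWc]. intros; apply HdW; lra. intros; apply Rlt_le, HdWpos; lra. }
    eapply Rle_lt_trans; [exact Hmid|]. apply (mvt_lt Wf dW); [lra| |]; intros; [apply HdW|apply HdWpos]; lra. }
  assert (Wneg : forall T t, 0 <= t <= T -> Wf T <= 0 -> Wf t <= 0).
  { intros T t Ht HT. destruct (Req_dec t T) as [->|]; auto. pose proof (Wstrict t T ltac:(lra)). lra. }
  assert (Rdec : forall T a b, 0 <= a <= b -> b <= T -> Wf T <= 0 -> Rf b <= Rf a).
  { intros T a b Hab HbT HT.
    assert (H : (fun x => -1 * Rf x) a <= (fun x => -1 * Rf x) b).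
    { apply (monoI (fun x => -1 * Rf x) (fun x => -1 * (Wf x / G x))); [lra| | |].
      - intros x Hx. apply drv_scal, HdR; lra.
      - intros x Hx. pose proof (Wneg T x ltac:(lra) HT). destruct (HG x ltac:(lra)) as [H1 _].
        assert (Wf x / G x <= 0). { unfold Rdiv. apply Rmult_le_0_r; [lra| apply Rlt_le, Rinv_0_lt_compat; lra]. } lra.
      - apply rc_mult; [apply rc_const|exact HRc]. }
    simpl in H. lra. }
  assert (Rle_r : forall T t, 0 <= t <= T -> Wf T <= 0 -> Rf t <= r).
  { intros T t Ht HT. rewrite <- HR0. apply (Rdec T); lra. }
  assert (Fle : forall T t, 0 <= t <= T -> Wf T <= 0 -> Wf t ^ 2 + l / Rf t ^ 2 <= E).
  { intros T t Ht HT.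
    assert (H : (fun x => -1 * (Wf x ^ 2 + l / Rf x ^ 2)) 0 <= (fun x => -1 * (Wf x ^ 2 + l / Rf x ^ 2)) t).
    { apply (monoI (fun x => -1 * (Wf x ^ 2 + l / Rf x ^ 2))
        (fun x => -1 * (2 * Wf x * dW x + (Wf x / G x) * (-2 * l / Rf x ^ 3)))); [lra| | |].
      - intros x Hx. apply drv_scal, drv_plus.
        + apply drv_sq, HdW; lra.
        + apply (drv_comp (fun y => l / y ^ 2)). apply drv_inv_sq. pose proof (HRpos x ltac:(lra)); lra.
          apply HdR; lra.
      - intros x Hx. pose proof (Wneg T x ltac:(lra) HT). destruct (HG x ltac:(lra)) as [H1 _].
        pose proof (HRpos x ltac:(lra)). destruct (Hm x (Rf x) ltac:(lra) ltac:(auto)).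
        assert (Heq : -1 * (2 * Wf x * dW x + (Wf x / G x) * (-2 * l / Rf x ^ 3)) = (-2 * Wf x) * (m x (Rf x) / Rf x ^ 2)).
        { unfold dW. field. split; lra. }
        rewrite Heq. apply Rmult_le_pos; [lra|]. apply Rdiv_le_0_compat; [lra| apply pow2_gt_0; lra].
      - apply rc_mult; [apply rc_const|]. apply rc_plus.
        + apply (rc_comp Wf (fun y => y ^ 2)); [exact HWc| apply cont_sq].
        + apply (rc_comp Rf (fun y => l / y ^ 2)); [exact HRc| apply cont_inv_sq; lra]. }
    cbv beta in H. rewrite HR0, HW0 in H. unfold E. lra. }
  assert (Gle : forall T t, 0 <= t <= T -> Wf T <= 0 -> G t <= g0).
  { intros T t Ht HT. unfold G, gam, g0. apply sqrt_le_1_alt. pose proof (Fle T t Ht HT). unfold E in H. lra. }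
  set (c := l / (r ^ 3 * g0)).
  assert (Hc : 0 < c) by (unfold c; apply Rdiv_lt_0_compat; [lra| apply Rmult_lt_0_compat; [apply pow_lt|]; lra]).
  assert (Wlow : forall T t, 0 <= t <= T -> Wf T <= 0 -> w + c * t <= Wf t).
  { intros T t Ht HT.
    assert (H : (fun x => Wf x + (- c) * x) 0 <= (fun x => Wf x + (- c) * x) t).
    { apply (monoI (fun x => Wf x + (- c) * x) (fun x => dW x + (- c) * 1)); [lra| | |].
      - intros x Hx. apply drv_plus. apply HdW; lra. apply drv_scal, drv_id.
      - intros x Hx. destruct (HG x ltac:(lra)) as [H1 _]. pose proof (Gle T x ltac:(lra) HT).
        pose proof (HRpos x ltac:(lra)). pose proof (Rle_r T x ltac:(lra) HT).
        destruct (Hm x (Rf x) ltac:(lra) ltac:(auto)).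
        assert (0 <= m x (Rf x) / Rf x ^ 2) by (apply Rdiv_le_0_compat; [lra| apply pow2_gt_0; lra]).
        assert (c <= l / (Rf x ^ 3 * G x)).
        { unfold c. apply div_anti; [lra|]. split. apply Rmult_lt_0_compat; [apply pow_lt|]; lra.
          apply Rmult_le_compat; try lra. apply pow_le; lra. apply pow_incr; lra. }
        unfold dW. lra.
      - apply rc_plus; [exact HWc|]. apply rc_mult; [apply rc_const|apply rc_id]. }
    cbv beta in H. rewrite HW0 in H. lra. }
  set (K0 := w ^ 2 + D / r ^ 2).
  assert (Kup : forall T t, 0 <= t <= T -> Wf T <= 0 -> K0 <= Wf t ^ 2 + D / Rf t ^ 2).
  { intros T t Ht HT.
    assert (H : (fun x => Wf x ^ 2 + D / Rf x ^ 2) 0 <= (fun x => Wf x ^ 2 + D / Rf x ^ 2) t).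
    { apply (monoI (fun x => Wf x ^ 2 + D / Rf x ^ 2)
        (fun x => 2 * Wf x * dW x + (Wf x / G x) * (-2 * D / Rf x ^ 3))); [lra| | |].
      - intros x Hx. apply drv_plus.
        + apply drv_sq, HdW; lra.
        + apply (drv_comp (fun y => D / y ^ 2)). apply drv_inv_sq. pose proof (HRpos x ltac:(lra)); lra.
          apply HdR; lra.
      - intros x Hx. pose proof (Wneg T x ltac:(lra) HT). destruct (HG x ltac:(lra)) as [H1 _].
        pose proof (Gle T x ltac:(lra) HT). pose proof (Rle_r T x ltac:(lra) HT).
        pose proof (HRpos x ltac:(lra)). destruct (Hm x (Rf x) ltac:(lra) ltac:(auto)).
        assert (Heq : 2 * Wf x * dW x + (Wf x / G x) * (-2 * D / Rf x ^ 3)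
                      = (-2 * Wf x) * (D - l - m x (Rf x) * Rf x * G x) / (Rf x ^ 3 * G x)).
        { unfold dW. field. split; lra. }
        rewrite Heq. apply Rdiv_le_0_compat; [| apply Rmult_lt_0_compat; [apply pow_lt|]; lra].
        apply Rmult_le_pos; [lra|].
        assert (m x (Rf x) * Rf x * G x <= M * r * g0).
        { apply Rmult_le_compat; try lra. apply Rmult_le_pos; lra. apply Rmult_le_compat; lra. }
        unfold D. lra.
      - apply rc_plus.
        + apply (rc_comp Wf (fun y => y ^ 2)); [exact HWc| apply cont_sq].
        + apply (rc_comp Rf (fun y => D / y ^ 2)); [exact HRc| apply cont_inv_sq; lra]. }
    cbv beta in H. rewrite HR0, HW0 in H. unfold K0. lra. }
  assert (Rlow : forall T t, 0 <= t <= T -> Wf T <= 0 -> r <= Rf t + t).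
  { intros T t Ht HT.
    assert (H : (fun x => Rf x + x) 0 <= (fun x => Rf x + x) t).
    { apply (monoI (fun x => Rf x + x) (fun x => Wf x / G x + 1)); [lra| | |].
      - intros x Hx. apply drv_plus. apply HdR; lra. apply drv_id.
      - intros x Hx. destruct (HG x ltac:(lra)) as [H1 [_ H3]]. apply Rabs_def2 in H3.
        replace (Wf x / G x + 1) with ((Wf x + G x) / G x) by (field; lra).
        apply Rdiv_le_0_compat; lra.
      - apply rc_plus; [exact HRc| apply rc_id]. }
    cbv beta in H. rewrite HR0 in H. lra. }
  assert (HK0 : 0 < K0) by (unfold K0; assert (0 < D / r ^ 2) by (apply Rdiv_lt_0_compat; [lra|apply pow2_gt_0; lra]); nra).
  assert (HK0r : K0 * r ^ 2 - D = (r * w) ^ 2) by (unfold K0; field; lra).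
  assert (I5 : forall T t, 0 <= t <= T -> Wf T <= 0 ->
            Rf t ^ 2 <= (r - Rabs w / g0 * t) ^ 2 + D / (r ^ 2 * (1 + w ^ 2 + l / r ^ 2)) * t ^ 2).
  { intros T t Ht HT.
    rewrite Rabs_left by lra. rewrite <- Hg02.
    set (P := (r - - w / g0 * t) ^ 2 + D / (r ^ 2 * g0 ^ 2) * t ^ 2).
    assert (HP : K0 * P - D = (r * w + K0 * t / g0) ^ 2) by (unfold P, K0; field; lra).
    pose proof (HRpos t ltac:(lra)) as HRt.
    destruct (Rle_lt_dec (K0 * Rf t ^ 2) D) as [Hle|Hgt].
    { assert (0 <= (r * w + K0 * t / g0) ^ 2) by apply pow2_ge_0. nra. }
    destruct (Req_dec t 0) as [->|Ht0].
    { unfold P. rewrite HR0. right. field. lra. }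
    assert (Hpos : forall x, 0 < x <= t -> 0 < K0 * Rf x ^ 2 - D).
    { intros x Hx. pose proof (Rdec T x t ltac:(lra) ltac:(lra) HT). pose proof (HRpos x ltac:(lra)).
      assert (Rf t ^ 2 <= Rf x ^ 2) by (apply pow_incr; lra). nra. }
    pose (S := fun x => sqrt (K0 * x ^ 2 - D)).
    assert (H : (fun x => -1 * S (Rf x) + (- (K0 / g0)) * x) 0 <= (fun x => -1 * S (Rf x) + (- (K0 / g0)) * x) t).
    { apply (monoI (fun x => -1 * S (Rf x) + (- (K0 / g0)) * x)
        (fun x => -1 * ((Wf x / G x) * (K0 * Rf x / S (Rf x))) + (- (K0 / g0)) * 1)); [lra| | |].
      - intros x Hx. apply drv_plus; [|apply drv_scal, drv_id]. apply drv_scal.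
        apply (drv_comp S). apply drv_sqrtq, Hpos; lra. apply HdR; lra.
      - intros x Hx. pose proof (Wneg T x ltac:(lra) HT). destruct (HG x ltac:(lra)) as [H1 _].
        pose proof (Gle T x ltac:(lra) HT). pose proof (HRpos x ltac:(lra)).
        pose proof (Kup T x ltac:(lra) HT). pose proof (Hpos x Hx).
        assert (HS : 0 < S (Rf x)) by (apply sqrt_lt_R0; auto).
        assert (HSle : S (Rf x) <= - Wf x * Rf x).
        { unfold S. rewrite <- (sqrt_pow2 (- Wf x * Rf x)) by nra. apply sqrt_le_1_alt.
          assert (Hd : D / Rf x ^ 2 * Rf x ^ 2 = D) by (field; lra).
          assert (K0 * Rf x ^ 2 <= (Wf x ^ 2 + D / Rf x ^ 2) * Rf x ^ 2) by (apply Rmult_le_compat_r; [apply pow2_ge_0|lra]).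
          nra. }
        replace (-1 * ((Wf x / G x) * (K0 * Rf x / S (Rf x))) + (- (K0 / g0)) * 1)
          with (K0 * ((- Wf x * Rf x) * g0 - G x * S (Rf x)) / (G x * S (Rf x) * g0)) by (field; lra).
        apply Rdiv_le_0_compat; [|apply Rmult_lt_0_compat; [apply Rmult_lt_0_compat|]; lra].
        apply Rmult_le_pos; [lra|]. nra.
      - apply rc_plus.
        + apply rc_mult; [apply rc_const|]. apply (rc_comp Rf S); [exact HRc|]. apply cont_sqrtq.
          rewrite HR0, HK0r. apply pow2_gt_0. nra.
        + apply rc_mult; [apply rc_const|apply rc_id]. }
    cbv beta in H. rewrite HR0 in H. unfold S in H. rewrite HK0r in H.
    replace ((r * w) ^ 2) with ((- (r * w)) ^ 2) in H by ring. rewrite sqrt_pow2 in H by nra.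
    assert (Hst : 0 <= sqrt (K0 * Rf t ^ 2 - D)) by apply sqrt_pos.
    assert (Hsq : sqrt (K0 * Rf t ^ 2 - D) ^ 2 = K0 * Rf t ^ 2 - D) by (apply pow2_sqrt; lra).
    assert (Hle2 : sqrt (K0 * Rf t ^ 2 - D) ^ 2 <= (r * w + K0 * t / g0) ^ 2).
    { replace ((r * w + K0 * t / g0) ^ 2) with ((- (r * w) - K0 * t / g0) ^ 2) by ring.
      apply pow_incr. split; [lra|]. replace (K0 * t / g0) with (K0 / g0 * t) by (field; lra). nra. }
    nra. }
  set (Tb := - w * r ^ 3 * g0 / l).
  assert (HTb : 0 < Tb).
  { unfold Tb. assert (0 < r ^ 3) by (apply pow_lt; lra). apply Rdiv_lt_0_compat; [|lra]. apply Rmult_lt_0_compat; [apply Rmult_lt_0_compat|]; lra. }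
  assert (HcTb : c * Tb = - w) by (unfold c, Tb; field; lra).
  assert (WTb : 0 <= Wf Tb).
  { destruct (Rle_lt_dec (Wf Tb) 0) as [H|H]; [|lra]. pose proof (Wlow Tb Tb ltac:(lra) H). lra. }
  assert (WTb1 : 0 < Wf (Tb + 1)) by (pose proof (Wstrict Tb (Tb + 1) ltac:(lra)); lra).
  destruct (rc_extract Wf (Wf 0) (- w / 2) HWc ltac:(lra)) as [d [Hd Hdd]].
  set (eps := Rmin (d / 2) 1).
  assert (Heps : 0 < eps <= 1) by (unfold eps; split; [apply Rmin_glb_lt; lra| apply Rmin_r]).
  assert (Hepsd : eps < d) by (unfold eps; eapply Rle_lt_trans; [apply Rmin_l|lra]).
  assert (Weps : Wf eps < 0).
  { specialize (Hdd eps ltac:(lra)). rewrite HW0 in Hdd. apply Rabs_def2 in Hdd. lra. }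
  destruct (Ranalysis5.IVT_interv Wf eps (Tb + 1)) as [T0 [HT0 WT0]].
  { intros a Ha. apply continuity_pt_filterlim. apply (cont_R Wf a _ (HdW a ltac:(lra))). }
  { lra. } { lra. } { lra. }
  assert (HT0p : 0 < T0) by lra.
  assert (HT0n : Wf T0 <= 0) by lra.
  assert (Hsc : sign_change_time Wf T0).
  { split; [lra|split; [|split; [lra|]]].
    - intros t Ht. pose proof (Wstrict t T0 ltac:(lra)). lra.
    - intros t Ht. pose proof (Wstrict T0 t ltac:(lra)). lra. }
  pose proof (Fle T0 T0 ltac:(lra) HT0n) as F0. rewrite WT0 in F0.
  pose proof (Kup T0 T0 ltac:(lra) HT0n) as K1. rewrite WT0 in K1.
  pose proof (HRpos T0 ltac:(lra)) as HR1.
  assert (Hup : Rf T0 <= r * sqrt (D / (r ^ 2 * w ^ 2 + D))).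
  { apply sqrt_bound_le; try lra. assert (0 < r ^ 2 * w ^ 2) by (apply Rmult_lt_0_compat; apply pow2_gt_0; lra). lra.
    assert (H' : K0 * (r ^ 2 * Rf T0 ^ 2) <= (0 ^ 2 + D / Rf T0 ^ 2) * (r ^ 2 * Rf T0 ^ 2))
      by (apply Rmult_le_compat_r; [apply Rmult_le_pos; apply pow2_ge_0|lra]).
    replace (K0 * (r ^ 2 * Rf T0 ^ 2)) with (Rf T0 ^ 2 * (r ^ 2 * w ^ 2 + D)) in H' by (unfold K0; field; lra).
    replace ((0 ^ 2 + D / Rf T0 ^ 2) * (r ^ 2 * Rf T0 ^ 2)) with (r ^ 2 * D) in H' by (field; lra).
    lra. }
  exists T0. split; [exact Hsc|]. split.
  { intros T1 [H1 [H2 [H3 H4]]]. destruct (Rtotal_order T1 T0) as [Hlt|[Heq|Hgt]]; auto.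
    - pose proof (Wstrict T1 T0 ltac:(lra)). lra.
    - pose proof (Wstrict T0 T1 ltac:(lra)). lra. }
  split; [split|split; [split|split]].
  - pose proof (Rlow T0 T0 ltac:(lra) HT0n). nra.
  - pose proof (Wlow T0 T0 ltac:(lra) HT0n). fold Tb.
    apply (Rmult_le_reg_l c); auto. lra.
  - apply sqrt_bound_ge; try lra. assert (0 < r ^ 2 * w ^ 2) by (apply Rmult_lt_0_compat; apply pow2_gt_0; lra). lra.
    assert (H' : (0 ^ 2 + l / Rf T0 ^ 2) * (r ^ 2 * Rf T0 ^ 2) <= E * (r ^ 2 * Rf T0 ^ 2))
      by (apply Rmult_le_compat_r; [apply Rmult_le_pos; apply pow2_ge_0|lra]).
    replace (E * (r ^ 2 * Rf T0 ^ 2)) with (Rf T0 ^ 2 * (r ^ 2 * w ^ 2 + l)) in H' by (unfold E; field; lra).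
    replace ((0 ^ 2 + l / Rf T0 ^ 2) * (r ^ 2 * Rf T0 ^ 2)) with (r ^ 2 * l) in H' by (field; lra).
    lra.
  - exact Hup.
  - intros t Ht. apply (Fle T0 t Ht HT0n).
  - intros t Ht. apply (I5 T0 t Ht HT0n).
Qed.
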